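(* Let $(M,\varepsilon)$ be a local Lie group and $p\in M$. Then the complex $$T_p\xrightarrow{\widehat d(p)}T_p^*\otimes T_p\xrightarrow{\widehat d(p)}\Lambda^2(T_p^* )\otimes T_p\xrightarrow{\widehat d(p)}\cdots\xrightarrow{\widehat d(p)}\Lambda^n(T_p^* )\otimes T_p$$ is the complex computing the Chevalley–Eilenberg cohomology of the Lie algebra $\mathfrak g_p=(T_pM,[\cdot,\cdot]_p)$ with coefficients in its adjoint representation; that is, its cohomology is the deformation cohomology $H^*(\mathfrak g_p,\mathfrak g_p)$.
   Context: $M$ is a smooth manifold of dimension $n\ge2$. A splitting $\varepsilon$ assigns to each $(p,q)\in M\times M$ a linear isomorphism $\varepsilon(p,q):T_pM\to T_qM$, smooth in $(p,q)$, with $\varepsilon(q,r)\circ\varepsilon(p,q)=\varepsilon(p,r)$, $\varepsilon(p,p)=\mathrm{id}$. In coordinates $\varepsilon(p,q)=(\varepsilon^i_j(x,y))$; set $\Gamma^i_{kj}(x)=[\partial\varepsilon^i_j(x,y)/\partial y^k]_{y=x}$ (summation convention) and $T^i_{jk}=\Gamma^i_{jk}-\Gamma^i_{kj}$. $(M,\varepsilon)$ is a local Lie group if the system $\partial f^i(x)/\partial x^j=\varepsilon^i_j(x,f(x))$ is completely integrable; equivalently $\widehat{\mathfrak{R}}=0$ with $\widehat{\mathfrak{R}}^i_{rj,k}=\partial_r\Gamma^i_{kj}+\Gamma^a_{kr}\Gamma^i_{aj}-\partial_j\Gamma^i_{kr}-\Gamma^a_{kj}\Gamma^i_{ar}$.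 In that case $[u,v]_p^i=T^i_{ab}(p)u^av^b$ makes $T_pM$ a Lie algebra $\mathfrak g_p$ (isomorphic to the Lie algebra of $\varepsilon$-invariant vector fields). A tensor field $\xi$ is $\varepsilon$-invariant if $\varepsilon(p,q)_*\xi(p)=\xi(q)$ for all $p,q$; every $\sigma_p\in\Lambda^k(T_p^* )\otimes T_p$ extends uniquely to an $\varepsilon$-invariant section $\sigma$ of $\Lambda^k(T^*M)\otimes TM$. For a $TM$-valued $k$-form $\xi$, with $\widehat d_r\xi^i_{jl\dots m}=\partial_r\xi^i_{jl\dots m}-\Gamma^i_{ar}\xi^a_{jl\dots m}$, define $(\widehat d\xi)^i_{rjl\dots m}=\widehat d_r\xi^i_{jl\dots m}-\widehat d_j\xi^i_{rl\dots m}-\widehat d_l\xi^i_{jr\dots m}-\dots-\widehat d_m\xi^i_{jl\dots r}$ ($k=0$: $(\widehat d\xi)^i_r=\partial_r\xi^i-\Gamma^i_{ar}\xi^a$). The localization is $\widehat d(p)(\sigma_p)=(\widehat d\sigma)(p)$, where $\sigma$ is the $\varepsilon$-invariant extension of $\sigma_p$. *)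

(* Defs.v *)
(* Coordinate (chart) model of (M, eps). *)
From HB Require Import structures.
From mathcomp Require Import all_boot all_order all_algebra.
From mathcomp Require Import all_classical all_reals all_analysis.
Set Implicit Arguments. Unset Strict Implicit. Unset Printing Implicit Defensive.
Import Order.TTheory GRing.Theory Num.Theory.
Import numFieldNormedType.Exports.
Local Open Scope classical_set_scope.
Local Open Scope ring_scope.

Definition ev (R : realType) (n : nat) (k : 'I_n) : 'rV[R]_n := delta_mx 0 k.

Fixpoint Ck (R : realType) (V : normedModType R) (A : set V) (m : nat)
  (f : V -> R) : Prop :=
  match m with
  | 0 => forall x, A x -> {for x, continuous f}
  | m'.+1 => (forall x, A x -> differentiable f x) /\
             (forall v : V, Ck A m' (fun x => derive f x v))
  end.
Definition smooth_on (R : realType) (V : normedModType R) (A : set V)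
  (f : V -> R) : Prop := forall m, Ck A m f.

(* eps x y is the matrix (eps^i_j(x,y)) of eps(p,q) : T_p -> T_q, acting on
   column vectors of components: (eps(p,q) u)^i = sum_j eps^i_j u^j. *)
Definition is_splitting (R : realType) (n : nat) (U : set 'rV[R]_n)
  (eps : 'rV[R]_n -> 'rV[R]_n -> 'M[R]_n) : Prop :=
  [/\ (forall i j, smooth_on (U `*` U) (fun z : 'rV[R]_n * 'rV[R]_n => eps z.1 z.2 i j)),
      (forall x y, U x -> U y -> eps x y \in unitmx),
      (forall x y z, U x -> U y -> U z -> eps y z *m eps x y = eps x z) &
      (forall x, U x -> eps x x = 1%:M)].

(* complete integrability of  d f^i / d x^j = eps^i_j (x, f(x)):
   through every initial condition (x0, y0) passes a local solution *)
Definition local_lie_group (R : realType) (n : nat) (U : set 'rV[R]_n)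
  (eps : 'rV[R]_n -> 'rV[R]_n -> 'M[R]_n) : Prop :=
  forall x0 y0, U x0 -> U y0 ->
  exists (W : set 'rV[R]_n) (f : 'rV[R]_n -> 'rV[R]_n),
    [/\ open W, W x0, W `<=` U, f x0 = y0 &
        forall x, W x -> U (f x) /\
          forall i j : 'I_n,
            derivable (fun z => f z 0 i) x (ev R j) /\
            derive (fun z => f z 0 i) x (ev R j) = eps x (f x) i j].

Definition Gam (R : realType) (n : nat) (eps : 'rV[R]_n -> 'rV[R]_n -> 'M[R]_n)
  (x : 'rV[R]_n) (i k j : 'I_n) : R :=
  derive (fun y => eps x y i j) x (ev R k).

Definition Tor (R : realType) (n : nat) (eps : 'rV[R]_n -> 'rV[R]_n -> 'M[R]_n)
  (x : 'rV[R]_n) (i j k : 'I_n) : R := Gam eps x i j k - Gam eps x i k j.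

Definition brk (R : realType) (n : nat) (eps : 'rV[R]_n -> 'rV[R]_n -> 'M[R]_n)
  (p : 'rV[R]_n) (u v : 'I_n -> R) : 'I_n -> R :=
  fun i => \sum_(a < n) \sum_(b < n) Tor eps p i a b * u a * v b.

Definition evc (R : realType) (n : nat) (a : 'I_n) : 'I_n -> R :=
  fun b => (b == a)%:R.

(* A TM-valued k-form at a point (element of Lambda^k(T_p^* ) (x) T_p) is given
   by its components c i J = c^i_{j_1 ... j_k}, J = [:: j_1; ...; j_k]
   (only lists of size k matter); it must be alt_form. *)
Definition swap_at (n : nat) (d : 'I_n) (J : seq 'I_n) (a b : nat) : seq 'I_n :=
  set_nth d (set_nth d J a (nth d J b)) b (nth d J a).

Definition alt_form (R : realType) (n k : nat) (c : 'I_n -> seq 'I_n -> R) : Prop :=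
  forall (i : 'I_n) (J : seq 'I_n), size J = k ->
  forall a b : nat, (a < b < k)%N -> c i (swap_at i J a b) = - c i J.

(* eps-invariant extension of sigma_p : sigma(q) = eps(p,q)_* sigma_p, i.e.
   sigma(q)(v_1..v_k) = A sigma_p(A^{-1} v_1, ..., A^{-1} v_k), A = eps(p,q) *)
Definition inv_ext (R : realType) (n : nat) (eps : 'rV[R]_n -> 'rV[R]_n -> 'M[R]_n)
  (p : 'rV[R]_n) (k : nat) (c : 'I_n -> seq 'I_n -> R)
  (q : 'rV[R]_n) (i : 'I_n) (J : seq 'I_n) : R :=
  \sum_(a < n) eps p q i a *
    \sum_(B : {ffun 'I_k -> 'I_n})
       c a (codom B) * \prod_(t < k) invmx (eps p q) (B t) (nth i J t).

Definition dhat_r (R : realType) (n : nat) (eps : 'rV[R]_n -> 'rV[R]_n -> 'M[R]_n)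
  (p : 'rV[R]_n) (k : nat) (c : 'I_n -> seq 'I_n -> R)
  (r i : 'I_n) (J : seq 'I_n) : R :=
  derive (fun q => inv_ext eps p k c q i J) p (ev R r)
  - \sum_(a < n) Gam eps p i a r * inv_ext eps p k c p a J.

Definition dhat_loc (R : realType) (n : nat) (eps : 'rV[R]_n -> 'rV[R]_n -> 'M[R]_n)
  (p : 'rV[R]_n) (k : nat) (c : 'I_n -> seq 'I_n -> R)
  (i : 'I_n) (J' : seq 'I_n) : R :=
  let r := nth i J' 0 in
  let J := behead J' in
  dhat_r eps p k c r i J
  - \sum_(m < k) dhat_r eps p k c (nth i J m) i (set_nth i J m r).

Definition rem_at (T : Type) (m : nat) (s : seq T) : seq T :=
  take m s ++ drop m.+1 s.

(* Chevalley-Eilenberg differential of g_p with coefficients in the adjoint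
   representation, evaluated on basis vectors x_m = e_{J'_m}:
   (dc)(x_0..x_k) = sum_m (-1)^m [x_m, c(.. ^x_m ..)]
                  + sum_{m<l} (-1)^(m+l) c([x_m,x_l], .. ^x_m .. ^x_l ..)   *)
Definition CE_diff (R : realType) (n : nat) (eps : 'rV[R]_n -> 'rV[R]_n -> 'M[R]_n)
  (p : 'rV[R]_n) (k : nat) (c : 'I_n -> seq 'I_n -> R)
  (i : 'I_n) (J' : seq 'I_n) : R :=
  \sum_(m < k.+1) (-1) ^+ m *
     brk eps p (evc R (nth i J' m)) (fun b => c b (rem_at m J')) i
  + \sum_(m < k.+1) \sum_(l < k.+1 | (m < l)%N) (-1) ^+ (m + l) *
     \sum_(e < n) brk eps p (evc R (nth i J' m)) (evc R (nth i J' l)) e *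
        c i (e :: rem_at m (rem_at l J')).

(* Main.v *)
Require Import Defs.
From HB Require Import structures.
From mathcomp Require Import all_boot all_order all_algebra.
From mathcomp Require Import all_classical all_reals all_analysis.
From mathcomp Require Import zify ring.
Import Order.TTheory GRing.Theory Num.Theory.
Import numFieldNormedType.Exports.
Set Implicit Arguments. Unset Strict Implicit.

Section L.
Variable T : Type.
Implicit Types s : seq T.

Lemma size_rem_at m s : (m < size s)%N -> size (rem_at m s) = (size s).-1.
Proof.
move=> ms; rewrite /rem_at size_cat size_take size_drop ms; lia.
Qed.

Lemma nth_rem_at x0 m s j : (m < size s)%N ->
  nth x0 (rem_at m s) j = if (j < m)%N then nth x0 s j else nth x0 s j.+1.
Proof.
move=> ms; rewrite /rem_at nth_cat size_take ms.
case: ltnP => h; first by rewrite nth_take.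
rewrite nth_drop; congr nth; lia.
Qed.
End L.

Section S.
Variable n : nat.
Implicit Types (d : 'I_n) (s P L : seq 'I_n).

Lemma size_swap d s a b : (a < size s)%N -> (b < size s)%N ->
  size (swap_at d s a b) = size s.
Proof. by move=> ha hb; rewrite /swap_at !size_set_nth; lia. Qed.

Lemma nth_swap d s a b j : (a < size s)%N -> (b < size s)%N -> a != b ->
  nth d (swap_at d s a b) j =
  if j == a then nth d s b else if j == b then nth d s a else nth d s j.
Proof.
move=> ha hb ab; rewrite /swap_at !nth_set_nth /=.
case: (eqVneq j b) => [->|jb]; first by rewrite eq_sym (negPf ab).
by rewrite nth_set_nth /=; case: (eqVneq j a).
Qed.

Lemma swap_cat d P L m : (m.+1 < size L)%N ->
  swap_at d (P ++ L) (size P + m) (size P + m.+1) = P ++ swap_at d L m m.+1.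
Proof.
move=> hm.
have h1 : (size P + m < size (P ++ L))%N by rewrite size_cat; lia.
have h2 : (size P + m.+1 < size (P ++ L))%N by rewrite size_cat; lia.
have h3 : (m < size L)%N by lia.
have h4 : size P + m != size P + m.+1 by apply/eqP; lia.
have h5 : m != m.+1 by apply/eqP; lia.
apply: (@eq_from_nth _ d).
  by rewrite size_swap // !size_cat size_swap.
move=> j; rewrite size_swap // => hj.
rewrite nth_swap // !nth_cat nth_swap //.
case: (ltnP j (size P)) => hjP.
  have -> : (j == size P + m) = false by apply/eqP; lia.
  by have -> : (j == size P + m.+1) = false by apply/eqP; lia.
have -> : (size P + m < size P)%N = false by lia.
have -> : (size P + m.+1 < size P)%N = false by lia.
have -> : (j == size P + m) = (j - size P == m) by apply/eqP/eqP; lia.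
have -> : (j == size P + m.+1) = (j - size P == m.+1) by apply/eqP/eqP; lia.
by rewrite !addKn.
Qed.

Lemma nth_swap_m d L m : (m.+1 < size L)%N ->
  nth d (swap_at d L m m.+1) m = nth d L m.+1.
Proof.
move=> hm; have h3 : (m < size L)%N by lia.
have h5 : m != m.+1 by apply/eqP; lia.
by rewrite nth_swap // eqxx.
Qed.

Lemma rem_swap d L m : (m.+1 < size L)%N ->
  rem_at m (swap_at d L m m.+1) = rem_at m.+1 L.
Proof.
move=> hm; have h3 : (m < size L)%N by lia.
have h5 : m != m.+1 by apply/eqP; lia.
have hs := size_swap d h3 hm.
apply: (@eq_from_nth _ d).
  by rewrite !size_rem_at ?hs.
move=> j; rewrite size_rem_at ?hs // => hj.
rewrite (nth_rem_at _ _ (m:=m)) ?hs //. rewrite (nth_rem_at _ _ (m:=m.+1)) //.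
rewrite !nth_swap //.
case: (ltnP j m) => h1.
  have -> : (j < m.+1)%N by apply: ltnW.
  rewrite (_ : (j == m) = false); last by rewrite ltn_eqF.
  by rewrite (_ : (j == m.+1) = false) // ltn_eqF // ltnW.
case: (ltnP j m.+1) => h2.
  have -> : j = m by apply/eqP; rewrite eqn_leq h1 -ltnS h2.
  by rewrite eqxx gtn_eqF.
rewrite (_ : (j.+1 == m) = false); last by rewrite gtn_eqF // ltnW.
by rewrite (_ : (j.+1 == m.+1) = false) // eqSS gtn_eqF.
Qed.
End S.

Import GRing.Theory.
Local Open Scope ring_scope.

Definition altK (K : ringType) (n k : nat) (c : 'I_n -> seq 'I_n -> K) : Prop :=
  forall (i : 'I_n) (J : seq 'I_n), size J = k ->
  forall a b : nat, (a < b < k)%N -> c i (swap_at i J a b) = - c i J.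

Lemma move_front (K : ringType) n k (c : 'I_n -> seq 'I_n -> K) : altK k c ->
  forall i m P L, size P + size L = k -> (m < size L)%N ->
  c i (P ++ L) = (-1) ^+ m * c i (P ++ nth i L m :: rem_at m L).
Proof.
move=> alt i; elim=> [|m IH] P L hk hm.
  by case: L hk hm => [|y L] //= _ _; rewrite expr0 mul1r /rem_at /= ?drop0.
have hm' : (m < size L)%N by apply: ltnW.
have hs : size (P ++ L) = k by rewrite size_cat.
have := alt i (P ++ L) hs (size P + m) (size P + m.+1).
rewrite swap_cat //.
have -> : (size P + m < size P + m.+1 < k)%N.
  by apply/andP; split; [rewrite ltn_add2l | rewrite -hk ltn_add2l].
move=> /(_ isT) E; rewrite -[LHS]opprK -E.
rewrite (IH P (swap_at i L m m.+1)); first last.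
- by rewrite size_swap.
- by rewrite size_swap.
by rewrite nth_swap_m // rem_swap // exprS mulN1r mulNr.
Qed.

Section S2.
Variable n : nat.
Implicit Types (d : 'I_n) (s J L : seq 'I_n).

Lemma rem_set_same d J m x : (m < size J)%N ->
  rem_at m (set_nth d J m x) = rem_at m J.
Proof.
move=> hm; have hs : size (set_nth d J m x) = size J.
  by rewrite size_set_nth; apply/maxn_idPr.
apply: (@eq_from_nth _ d); first by rewrite !size_rem_at ?hs.
move=> j; rewrite size_rem_at ?hs // => hj.
rewrite !nth_rem_at ?hs // !nth_set_nth /=.
case: ltnP => h1; first by rewrite ltn_eqF.
by rewrite gtn_eqF.
Qed.

Lemma rem_set_lt d J m t x : (m < t)%N -> (t < size J)%N ->
  rem_at t (set_nth d J m x) = set_nth d (rem_at t J) m x.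
Proof.
move=> hmt ht; have hm : (m < size J)%N by apply: ltn_trans ht.
have hs : size (set_nth d J m x) = size J.
  by rewrite size_set_nth; apply/maxn_idPr.
have hr : size (rem_at t J) = (size J).-1 by rewrite size_rem_at.
have hm' : (m < size (rem_at t J))%N by rewrite hr; lia.
apply: (@eq_from_nth _ d).
  by rewrite size_set_nth !size_rem_at ?hs //; lia.
move=> j; rewrite size_rem_at ?hs // => hj.
rewrite nth_rem_at ?hs // !nth_set_nth /= nth_rem_at //.
case: ltnP => h1 //.
have -> : (j.+1 == m) = false by apply/eqP; lia.
by have -> : (j == m) = false by apply/eqP; lia.
Qed.

Lemma set_set_comm d J m t x y : m != t ->
  set_nth d (set_nth d J m x) t y = set_nth d (set_nth d J t y) m x.
Proof.
move=> hmt; apply: (@eq_from_nth _ d).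
  by rewrite !size_set_nth maxnCA.
move=> j _; rewrite !nth_set_nth /=.
case: (eqVneq j t) => [jt|jt]; case: (eqVneq j m) => [jm|jm].
- by move: hmt; rewrite -jt -jm eqxx.
- by rewrite nth_set_nth /= jt eqxx.
- by rewrite nth_set_nth /= jm eqxx.
- by rewrite !nth_set_nth /= (negPf jt) (negPf jm).
Qed.

Lemma rem_rem d J t m : (t < m)%N -> (m < size J)%N ->
  rem_at m.-1 (rem_at t J) = rem_at t (rem_at m J).
Proof.
move=> htm hm; have ht : (t < size J)%N by apply: ltn_trans hm.
have hm1 : (m.-1 < size (rem_at t J))%N.
  by rewrite size_rem_at //; lia.
have ht1 : (t < size (rem_at m J))%N.
  by rewrite size_rem_at //; lia.
apply: (@eq_from_nth _ d); first by rewrite (size_rem_at hm1) (size_rem_at ht1) !size_rem_at.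
move=> j _; rewrite !nth_rem_at //.
do ! case: ltnP => ?; try (exfalso; lia); try done; congr nth; lia.
Qed.
End S2.

Section Alt.
Variables (K : ringType) (n k : nat) (c : 'I_n -> seq 'I_n -> K).
Hypothesis alt : altK k c.

Lemma alt_set i d J m x : size J = k -> (m < k)%N ->
  c i (set_nth d J m x) = (-1) ^+ m * c i (x :: rem_at m J).
Proof.
move=> hJ hm; have hs : size (set_nth d J m x) = k.
  by rewrite size_set_nth hJ; lia.
rewrite -[set_nth d J m x]cat0s (@move_front _ _ _ _ alt i m) ?hs //.
by rewrite (set_nth_default d) ?hs // nth_set_nth /= eqxx rem_set_same // hJ.
Qed.

Lemma alt_front2 i x y L : (size L).+2 = k ->
  c i (y :: x :: L) = - c i (x :: y :: L).
Proof.
move=> hL; have := @alt i (x :: y :: L) hL 0 1.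
by rewrite -hL => /(_ isT) /= <-.
Qed.

Lemma alt_set2 i d J m t x y : size J = k -> (m < t)%N -> (t < k)%N ->
  c i (set_nth d (set_nth d J m x) t y) =
  (-1) ^+ (m + t) * c i (y :: x :: rem_at m (rem_at t J)).
Proof.
move=> hJ hmt ht.
have hs : size (set_nth d J m x) = k by rewrite size_set_nth hJ; lia.
rewrite alt_set // rem_set_lt ?hJ //.
have hr : size (rem_at t J) = k.-1 by rewrite size_rem_at hJ.
rewrite -[y :: _]/([:: y] ++ _) (@move_front _ _ _ _ alt i m); first last.
- by rewrite size_set_nth hr; lia.
- by rewrite size_set_nth hr /=; lia.
rewrite (set_nth_default d); last by rewrite size_set_nth hr; lia.
rewrite nth_set_nth /= eqxx rem_set_same; last by rewrite hr; lia.
by rewrite mulrA -exprD addnC.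
Qed.

Lemma alt_set2' i d J m t x y : size J = k -> (t < m)%N -> (m < k)%N ->
  c i (set_nth d (set_nth d J m x) t y) =
  - ((-1) ^+ (t + m) * c i (y :: x :: rem_at t (rem_at m J))).
Proof.
move=> hJ htm hm.
rewrite set_set_comm; last by apply/eqP; lia.
rewrite alt_set2 // alt_front2 ?mulrN //.
by rewrite !size_rem_at ?hJ ?size_rem_at ?hJ; lia.
Qed.
End Alt.

Section Ffun.
Variables (K : comRingType) (n k : nat).
Implicit Types (F : {ffun 'I_k -> 'I_n} -> K) (f : 'I_k -> 'I_n).

Lemma prod_delta (B : {ffun 'I_k -> 'I_n}) f :
  \prod_(s < k) ((B s == f s)%:R : K) = (B == [ffun s => f s])%:R.
Proof.
case: (pickP (fun s => B s != f s)) => [s Hs | H].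
  rewrite (bigD1 s) //= (negPf Hs) mul0r.
  case: eqP => // E; move: Hs; by rewrite E ffunE eqxx.
have -> : B = [ffun s => f s].
  by apply/ffunP => s; rewrite ffunE; apply/eqP; have := H s; move/negbFE.
by rewrite eqxx big1 // => s _; rewrite ffunE eqxx.
Qed.

Lemma sum_delta F f :
  \sum_(B : {ffun 'I_k -> 'I_n}) F B * \prod_(s < k) ((B s == f s)%:R : K) =
  F [ffun s => f s].
Proof.
under eq_bigr => B _ do rewrite prod_delta.
rewrite (bigD1 [ffun s => f s]) //= eqxx mulr1 big1 ?addr0 //.
by move=> B /negPf ->; rewrite mulr0.
Qed.

Lemma sum_delta1 F f (t0 : 'I_k) (H : 'I_n -> 'I_k -> K) :
  \sum_(B : {ffun 'I_k -> 'I_n}) F B *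
    \prod_(s < k) (if s == t0 then H (B s) s else ((B s == f s)%:R : K)) =
  \sum_(b < n) H b t0 * F [ffun s => if s == t0 then b else f s].
Proof.
have E1 : forall B : {ffun 'I_k -> 'I_n},
  \prod_(s < k) (if s == t0 then H (B s) s else ((B s == f s)%:R : K)) =
  \sum_(b < n) H b t0 * \prod_(s < k)
     ((B s == (if s == t0 then b else f s))%:R : K).
  move=> B; rewrite (bigD1 t0) //= eqxx.
  have E3 : forall b, \prod_(s < k)
     ((B s == (if s == t0 then b else f s))%:R : K) =
     (B t0 == b)%:R * \prod_(s < k | s != t0)
        (if s == t0 then H (B s) s else (B s == f s)%:R).
    move=> b; rewrite (bigD1 t0) //= eqxx; congr (_ * _).
    by apply: eq_bigr => s /negPf ->.
  set P := \prod_(s < k | s != t0) _.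
  rewrite (eq_bigr (fun b => H b t0 * (B t0 == b)%:R * P)); last first.
    by move=> b _; rewrite E3 mulrA.
  rewrite -big_distrl /=; congr (_ * _).
  rewrite (bigD1 (B t0)) //= eqxx mulr1 big1 ?addr0 //.
  by move=> b /negPf; rewrite eq_sym => ->; rewrite mulr0.
under eq_bigr => B _ do rewrite E1 big_distrr /=.
rewrite exchange_big /=; apply: eq_bigr => b _.
under eq_bigr => B _ do rewrite mulrCA.
by rewrite -big_distrr /= sum_delta.
Qed.

Lemma codom_nth (g : 'I_k -> 'I_n) (J : seq 'I_n) d :
  size J = k -> (forall t : 'I_k, g t = nth d J t) -> codom [ffun t => g t] = J.
Proof.
move=> hJ hg; rewrite codomE.
apply: (@eq_from_nth _ d); first by rewrite size_map size_enum_ord.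
move=> j; rewrite size_map size_enum_ord => hj.
rewrite (nth_map (Ordinal hj)) ?size_enum_ord // ffunE hg.
by rewrite nth_enum_ord.
Qed.
End Ffun.

Section Algebra.
Variables (K : comRingType) (n k : nat) (G : 'I_n -> 'I_n -> 'I_n -> K)
  (c : 'I_n -> seq 'I_n -> K) (i : 'I_n).
Hypothesis alt : altK k c.
Let T x y z := G x y z - G x z y.

Definition Dfun (r : 'I_n) (J : seq 'I_n) : K :=
  \sum_(a < n) T i r a * c a J
  - \sum_(t < k) \sum_(b < n) G b r (nth i J t) * c i (set_nth i J t b).

Lemma E1 x0 J : size J = k ->
  \sum_(m < k.+1) (-1) ^+ m *
     \sum_(b < n) T i (nth i (x0 :: J) m) b * c b (rem_at m (x0 :: J)) =
  \sum_(a < n) T i x0 a * c a J -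
  \sum_(m < k) \sum_(a < n) T i (nth i J m) a * c a (set_nth i J m x0).
Proof.
move=> hJ; rewrite big_ord_recl; congr (_ + _).
  by rewrite expr0 mul1r /rem_at /= drop0.
rewrite -sumrN; apply: eq_bigr => m _.
rewrite lift0 mulr_sumr -sumrN; apply: eq_bigr => a _.
rewrite (alt_set alt) // (_ : rem_at m.+1 (x0 :: J) = x0 :: rem_at m J) //.
rewrite /= exprS; ring.
Qed.

Lemma bump0 m : bump 0 m = m.+1.
Proof. by rewrite /bump leq0n. Qed.

Lemma remS (T0 : Type) (x : T0) L m : rem_at m.+1 (x :: L) = x :: rem_at m L.
Proof. by []. Qed.

Lemma E4 x0 J (m : 'I_k) : size J = k ->
  \sum_(t < k) \sum_(b < n) G b (nth i J m) (nth i (set_nth i J m x0) t) *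
      c i (set_nth i (set_nth i J m x0) t b) =
  \sum_(b < n) G b (nth i J m) x0 * c i (set_nth i J m b)
  + \sum_(t < k | t != m) \sum_(b < n) G b (nth i J m) (nth i J t) *
      c i (set_nth i (set_nth i J m x0) t b).
Proof.
move=> hJ; rewrite (bigD1 m) //=; congr (_ + _).
  by apply: eq_bigr => b _; rewrite nth_set_nth /= eqxx set_set_nth eqxx.
apply: eq_bigr => t htm; apply: eq_bigr => b _.
by rewrite nth_set_nth /= (negPf (htm : (t:nat) != m)).
Qed.

Lemma split_ne (F : 'I_k -> K) (m : 'I_k) :
  \sum_(t < k | t != m) F t =
  \sum_(t < k | (m < t)%N) F t + \sum_(t < k | (t < m)%N) F t.
Proof.
rewrite (bigID (fun t : 'I_k => (m < t)%N)) /=; congr (_ + _); apply: eq_bigl => t.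
  by rewrite -[t != m]/((t:nat) != m); lia.
by rewrite -[t != m]/((t:nat) != m); lia.
Qed.

Lemma E23 x0 J : size J = k ->
  \sum_(m < k.+1) \sum_(l < k.+1 | (m < l)%N) (-1) ^+ (m + l) *
     \sum_(e < n) T e (nth i (x0 :: J) m) (nth i (x0 :: J) l) *
        c i (e :: rem_at m (rem_at l (x0 :: J))) =
  \sum_(m < k) (\sum_(b < n) G b (nth i J m) x0 * c i (set_nth i J m b)
  + \sum_(t < k | t != m) \sum_(b < n) G b (nth i J m) (nth i J t) *
      c i (set_nth i (set_nth i J m x0) t b))
  - \sum_(t < k) \sum_(b < n) G b x0 (nth i J t) * c i (set_nth i J t b).
Proof.
move=> hJ; rewrite big_ord_recl big_split /= addrAC; congr (_ + _).
  rewrite big_mkcond big_ord_recl /= add0r -sumrB.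
  apply: eq_bigr => t _; rewrite bump0 add0n mulr_sumr -sumrB.
  apply: eq_bigr => b _; rewrite (alt_set alt) //= /rem_at /= drop0.
  rewrite /T exprS; ring.
pose Y (m l : 'I_k) := (-1) ^+ (m + l) * \sum_(e < n) T e (nth i J m) (nth i J l) *
        c i (e :: x0 :: rem_at m (rem_at l J)).
transitivity (\sum_(m < k) \sum_(l < k | (m < l)%N) Y m l).
  apply: eq_bigr => m _; rewrite big_mkcond big_ord_recl /= add0r.
  rewrite [RHS]big_mkcond; apply: eq_bigr => l _.
  rewrite !bump0 ltnS; case: ifP => // hml.
  rewrite /Y addSn addnS !exprS mulrA mulrNN !mul1r; congr (_ * _).
under eq_bigr => m _ do rewrite split_ne.
rewrite big_split /= [X in _ = _ + X](exchange_big_dep xpredT) //= -big_split /=.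
apply: eq_bigr => m _; rewrite -big_split /=; apply: eq_bigr => l hml.
rewrite /Y mulr_sumr -big_split /=; apply: eq_bigr => e _.
rewrite (alt_set2 alt) // (alt_set2' alt) //.
rewrite /T; ring.
Qed.

Lemma algA x0 J : size J = k ->
  Dfun x0 J - \sum_(m < k) Dfun (nth i J m) (set_nth i J m x0) =
  \sum_(m < k.+1) (-1) ^+ m *
     \sum_(b < n) T i (nth i (x0 :: J) m) b * c b (rem_at m (x0 :: J))
  + \sum_(m < k.+1) \sum_(l < k.+1 | (m < l)%N) (-1) ^+ (m + l) *
     \sum_(e < n) T e (nth i (x0 :: J) m) (nth i (x0 :: J) l) *
        c i (e :: rem_at m (rem_at l (x0 :: J))).
Proof.
move=> hJ; rewrite (E1 x0 hJ) (E23 x0 hJ).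
have HQ := eq_bigr _ (fun (m : 'I_k) (_ : true) => E4 x0 m hJ).
rewrite -HQ /Dfun sumrB.
set A := \sum_(m < k) _; set B := \sum_(m < k) _; set C := \sum_(a < n) _.
set D := \sum_(t < k) _.
ring.
Qed.
End Algebra.

Local Open Scope classical_set_scope.
Local Open Scope ring_scope.

Section An.
Variables (R : realType) (n : nat).
Implicit Types (f g : 'rV[R]_n -> R).

Lemma dsum_seq (I : Type) (s : seq I) (h : I -> 'rV[R]_n -> R) x v :
  (forall i, derivable (h i) x v) ->
  derivable (fun y => \sum_(i <- s) h i y) x v /\
  'D_v (fun y => \sum_(i <- s) h i y) x = \sum_(i <- s) 'D_v (h i) x.
Proof.
move=> dh; elim: s => [|a s [IH1 IH2]].
  under [X in derivable X]funext => y do rewrite big_nil.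
  under [X in derive X]funext => y do rewrite big_nil.
  by rewrite big_nil; split; [exact: derivable_cst|exact: derive_cst].
have -> : (fun y => \sum_(i <- a :: s) h i y) = h a + (fun y => \sum_(i <- s) h i y).
  by apply: funext => y; rewrite big_cons.
by rewrite big_cons; split; [exact: derivableD|rewrite deriveD // IH2].
Qed.

Lemma dmul f g x v : derivable f x v -> derivable g x v ->
  derivable (fun y => f y * g y) x v /\
  'D_v (fun y => f y * g y) x = f x * 'D_v g x + g x * 'D_v f x.
Proof.
move=> df dg; have -> : (fun y => f y * g y) = f * g by [].
by split; [exact: derivableM|rewrite deriveM].
Qed.

Lemma dcstmul (a : R) f x v : derivable f x v ->
  derivable (fun y => a * f y) x v /\
  'D_v (fun y => a * f y) x = a * 'D_v f x.
Proof.
move=> df; have := dmul (derivable_cst a x v) df.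
by rewrite derive_cst mulr0 addr0.
Qed.

Lemma dprod k (h : 'I_k -> 'rV[R]_n -> R) x v :
  (forall t, derivable (h t) x v) ->
  derivable (fun y => \prod_(t < k) h t y) x v /\
  'D_v (fun y => \prod_(t < k) h t y) x =
  \sum_(t < k) \prod_(s < k) (if s == t then 'D_v (h s) x else h s x).
Proof.
elim: k h => [|k IH] h dh.
  under [X in derivable X]funext => y do rewrite big_ord0.
  under [X in derive X]funext => y do rewrite big_ord0.
  by rewrite big_ord0; split; [exact: derivable_cst|exact: derive_cst].
have E : (fun y => \prod_(t < k.+1) h t y) =
  (fun y => h ord0 y * \prod_(t < k) h (lift ord0 t) y).
  by apply: funext => y; rewrite big_ord_recl.
have [d1 d2] := IH (fun t => h (lift ord0 t)) (fun t => dh _).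
have [d3 d4] := dmul (dh ord0) d1.
rewrite E; split => //; rewrite d4 d2 big_ord_recl /=.
rewrite addrC; congr (_ + _).
  by rewrite [RHS]big_ord_recl eqxx [RHS]mulrC; congr (_ * _).
rewrite mulr_sumr; apply: eq_bigr => t _.
rewrite big_ord_recl (negPf (neq_lift _ _)); congr (_ * _).
Qed.
End An.

Section Main.
Variables (R : realType) (n : nat) (U : set 'rV[R]_n)
  (eps : 'rV[R]_n -> 'rV[R]_n -> 'M[R]_n) (p : 'rV[R]_n).
Hypotheses (oU : open U) (sU : is_splitting U eps) (Up : U p).

Lemma eps_pp : eps p p = 1%:M.
Proof. by case: sU => _ _ _ ->. Qed.

Lemma nearU : \forall q \near p, U q.
Proof. exact: open_nbhs_nbhs (conj oU Up). Qed.

Lemma diff_h a b : differentiable (fun z : 'rV[R]_n * 'rV[R]_n => eps z.1 z.2 a b) (p, p).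
Proof. by case: sU => sm _ _ _; have [d _] := sm a b 1%N; apply: d. Qed.

Lemma derN a b v : derivable (fun q => eps p q a b) p v.
Proof.
apply: diff_derivable.
have -> : (fun q => eps p q a b) =
  (fun z : 'rV[R]_n * 'rV[R]_n => eps z.1 z.2 a b) \o (fun q => (p, q)) by [].
apply: differentiable_comp; last exact: diff_h.
by apply: differentiable_pair; [exact: differentiable_cst | exact: ex_diff].
Qed.

Lemma derM a b v : derivable (fun q => eps q p a b) p v.
Proof.
apply: diff_derivable.
have -> : (fun q => eps q p a b) =
  (fun z : 'rV[R]_n * 'rV[R]_n => eps z.1 z.2 a b) \o (fun q => (q, p)) by [].
apply: differentiable_comp; last exact: diff_h.
by apply: differentiable_pair; [exact: ex_diff | exact: differentiable_cst].
Qed.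

Lemma DM a b v : 'D_v (fun q => eps q p a b) p = - 'D_v (fun q => eps p q a b) p.
Proof.
have E : \forall q \near p,
    (fun q => \sum_(c < n) eps q p a c * eps p q c b) q = (fun=> (a == b)%:R) q.
  near=> q; have Uq : U q by near: q; exact: nearU.
  case: sU => _ _ co _; have := co p q p Up Uq Up.
  by rewrite eps_pp => /matrixP /(_ a b); rewrite !mxE.
have := near_eq_derive v E; rewrite derive_cst.
have [_ ->] := @dsum_seq R n _ (index_enum 'I_n) (fun (c : 'I_n) (q : 'rV[R]_n) => eps q p a c * eps p q c b) p v
  (fun c => (dmul (@derM a c v) (@derN c b v)).1).
under eq_bigr => c _ do rewrite (dmul (@derM a c v) (@derN c b v)).2 eps_pp !mxE.
rewrite big_split /= (bigD1 a) //= big1 => [|c /negPf]; last first.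
  by rewrite eq_sym => ->; rewrite mul0r.
rewrite eqxx mul1r addr0 (bigD1 b) //= big1 => [|c /negPf]; last first.
  by move=> ->; rewrite mul0r.
rewrite eqxx mul1r addr0 => /eqP; rewrite addr_eq0 => /eqP.
by move=> ->; rewrite opprK.
Unshelve. all: by end_near. Qed.

Lemma sum_d1 (X : 'I_n -> R) a :
  \sum_(a' < n) (1%:M : 'M[R]_n) a a' * X a' = X a.
Proof.
under eq_bigr => a' _ do rewrite mxE.
rewrite (bigD1 a) //= eqxx mul1r big1 ?addr0 // => a' /negPf.
by rewrite eq_sym => ->; rewrite mul0r.
Qed.

Lemma sum_id k (c : 'I_n -> seq 'I_n -> R) a d (J : seq 'I_n) : size J = k ->
  \sum_(B : {ffun 'I_k -> 'I_n}) c a (codom B) *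
     \prod_(t < k) (1%:M : 'M[R]_n) (B t) (nth d J t) = c a J.
Proof.
move=> hJ.
have E : forall B : {ffun 'I_k -> 'I_n}, \prod_(t < k) (1%:M : 'M[R]_n) (B t) (nth d J t)
   = \prod_(t < k) ((B t == nth d J t)%:R : R).
  by move=> B; apply: eq_bigr => t _; rewrite mxE.
under eq_bigr => B _ do rewrite E.
by rewrite (sum_delta (fun B => c a (codom B))) (@codom_nth _ _ _ _ d hJ).
Qed.

Lemma inv_ext_p k c a J : size J = k -> inv_ext eps p k c p a J = c a J.
Proof.
move=> hJ; rewrite /inv_ext eps_pp invmx1.
by rewrite (sum_d1 (fun a' => \sum_(B : {ffun 'I_k -> 'I_n}) c a' (codom B) *
     \prod_(t < k) (1%:M : 'M[R]_n) (B t) (nth a J t))) sum_id.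
Qed.

Lemma DH k c r i J : size J = k ->
  dhat_r eps p k c r i J = @Dfun R n k (Gam eps p) c i r J.
Proof.
move=> hJ; rewrite /dhat_r.
under eq_bigr => a _ do rewrite inv_ext_p //.
set v := ev R r.
pose Pr (B : {ffun 'I_k -> 'I_n}) (q : 'rV[R]_n) :=
  \prod_(t < k) eps q p (B t) (nth i J t).
pose S (a : 'I_n) (q : 'rV[R]_n) :=
  \sum_(B <- index_enum {ffun 'I_k -> 'I_n}) c a (codom B) * Pr B q.
pose F (q : 'rV[R]_n) := \sum_(a <- index_enum 'I_n) eps p q i a * S a q.
have Ev : \forall q \near p, inv_ext eps p k c q i J = F q.
  near=> q; have Uq : U q by near: q; exact: nearU.
  rewrite /inv_ext /F /S /Pr.
  have -> : invmx (eps p q) = eps q p.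
    case: sU => _ un co _; have E1 := co p q p Up Uq Up.
    by rewrite -[RHS](mulmxK (un p q Up Uq) (eps q p)) E1 eps_pp mul1mx.
  done.
rewrite (near_eq_derive _ Ev).
have dP : forall B, derivable (Pr B) p v /\ 'D_v (Pr B) p =
    \sum_(t < k) \prod_(s < k) (if s == t then - Gam eps p (B s) r (nth i J s)
       else ((B s == nth i J s)%:R : R)).
  move=> B; have [d1 d2] := @dprod R n k (fun t q => eps q p (B t) (nth i J t)) p v
    (fun t => @derM _ _ v).
  split => //; rewrite /Pr d2; apply: eq_bigr => t _; apply: eq_bigr => s _.
  by case: ifP => _; rewrite ?DM // eps_pp mxE.
have dS : forall a, derivable (S a) p v /\ 'D_v (S a) p =
    \sum_(B : {ffun 'I_k -> 'I_n}) c a (codom B) * 'D_v (Pr B) p.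
  move=> a; have [d1 d2] := @dsum_seq R n _ (index_enum {ffun 'I_k -> 'I_n})
    (fun B q => c a (codom B) * Pr B q) p v (fun B => (dcstmul (c a (codom B)) (dP B).1).1).
  split => //; rewrite /S d2; apply: eq_bigr => B _.
  by rewrite (dcstmul (c a (codom B)) (dP B).1).2.
have [_ ->] := @dsum_seq R n _ (index_enum 'I_n)
    (fun a q => eps p q i a * S a q) p v (fun a => (dmul (@derN i a v) (dS a).1).1).
rewrite (eq_bigr (fun a => eps p p i a * 'D_v (S a) p +
   S a p * 'D_v (fun q => eps p q i a) p)); last first.
  by move=> a _; exact: (dmul (@derN i a v) (dS a).1).2.
have HS : forall a, S a p = c a J.
  by move=> a; rewrite /S /Pr eps_pp; exact: sum_id.
have HDS : 'D_v (S i) p = - \sum_(t < k) \sum_(b < n)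
    Gam eps p b r (nth i J t) * c i (set_nth i J t b).
  rewrite (dS i).2.
  under eq_bigr => B _ do rewrite (dP B).2 mulr_sumr.
  rewrite exchange_big /= -sumrN; apply: eq_bigr => t _.
  rewrite (@sum_delta1 R n k (fun B => c i (codom B)) (fun s => nth i J s) t
     (fun b s => - Gam eps p b r (nth i J s))).
  rewrite -sumrN; apply: eq_bigr => b _.
  have hs : size (set_nth i J t b) = k.
    by rewrite size_set_nth hJ; have := ltn_ord t; lia.
  have hg : forall t' : 'I_k, (if t' == t then b else nth i J t') = nth i (set_nth i J t b) t'.
    by move=> t'; rewrite nth_set_nth.
  by rewrite (codom_nth hs hg) mulNr.
rewrite big_split /= eps_pp sum_d1 HDS /Dfun.
under eq_bigr => a _ do rewrite HS.
have E2 : \sum_(a < n) (Gam eps p i r a - Gam eps p i a r) * c a J =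
  \sum_(a < n) c a J * 'D_v (fun q : 'rV[R]_n => eps p q i a) p -
  \sum_(a < n) Gam eps p i a r * c a J.
  rewrite -sumrB; apply: eq_bigr => a _; rewrite mulrBl; congr (_ - _).
  exact: mulrC.
rewrite E2; ring.
Unshelve. all: by end_near. Qed.
End Main.

Lemma brk_evc (R : realType) (n : nat) (eps : 'rV[R]_n -> 'rV[R]_n -> 'M[R]_n) p x
  (w : 'I_n -> R) i :
  brk eps p (evc R x) w i = \sum_(b < n) Tor eps p i x b * w b.
Proof.
rewrite /brk /evc (bigD1 x) //= [X in _ + X]big1 ?addr0.
  by apply: eq_bigr => b _; rewrite eqxx mulr1.
move=> a /negPf ha; rewrite big1 // => b _; by rewrite ha mulr0 mul0r.
Qed.

Lemma brk_evc2 (R : realType) (n : nat) (eps : 'rV[R]_n -> 'rV[R]_n -> 'M[R]_n) p x y e :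
  brk eps p (evc R x) (evc R y) e = Tor eps p e x y.
Proof.
rewrite brk_evc /evc (bigD1 y) //= eqxx mulr1 [X in _ + X]big1 ?addr0 //.
by move=> b /negPf ->; rewrite mulr0.
Qed.

Theorem proposition9 (R : realType) (n : nat) (U : set 'rV[R]_n)
  (eps : 'rV[R]_n -> 'rV[R]_n -> 'M[R]_n) (p : 'rV[R]_n) :
  (2 <= n)%N -> open U -> is_splitting U eps -> local_lie_group U eps -> U p ->
  forall k : nat, (k < n)%N ->
  forall c : 'I_n -> seq 'I_n -> R, alt_form k c ->
  forall (i : 'I_n) (J' : seq 'I_n), size J' = k.+1 ->
    dhat_loc eps p k c i J' = CE_diff eps p k c i J'.
Proof.
move=> _ oU sU _ Up k _ c alt i J' hJ'.
case: J' hJ' => [//|x0 J] /= [hJ].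
rewrite /dhat_loc /= (DH oU sU Up _ _ _ hJ).
rewrite (eq_bigr (fun m : 'I_k => @Dfun R n k (Gam eps p) c i (nth i J m) (set_nth i J m x0))); last first.
  move=> m _; apply: (DH oU sU Up).
  by rewrite size_set_nth hJ; have := ltn_ord m; lia.
rewrite (algA _ i (alt : altK k c) x0 hJ) /CE_diff.
congr (_ + _).
  apply: eq_bigr => m _; congr (_ * _); rewrite brk_evc.
  by apply: eq_bigr.
apply: eq_bigr => m _; apply: eq_bigr => l _; congr (_ * _).
by apply: eq_bigr => e _; rewrite brk_evc2.
Qed.
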